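(* Let $n,d$ be positive integers and let $\mathcal T_n$ be the triangular Ferrers diagram with column heights $(n,n-1,\dots,2,1)$. Then $(\mathcal T_n,d)$ is irreducible if and only if $d\le n\le 2d-3$.
   Context: A Ferrers diagram is a finite $\mathcal D\subseteq\{1,2,\dots\}^2$ such that $(x,y)\in\mathcal D$ implies $(i,j)\in\mathcal D$ for all $1\le i\le x$, $1\le j\le y$ (first coordinate = row). With column heights $c_i=|\mathcal D\cap(\mathbb N\times\{i\})|$, $\nu_j(\mathcal D,d)=\sum_{i\ge j+1}\max\{0,c_i-d+j\}$ for $0\le j\le d-1$ and $\nu_{\min}(\mathcal D,d)=\min_j\nu_j(\mathcal D,d)$. A point $P\in\mathcal D$ is removable if $\mathcal D\setminus\{P\}$ is a Ferrers diagram. For $\mathcal D'=\mathcal D\setminus\{P\}$ with $P$ removable, write $\mathcal D'\xrightarrow{d}\mathcal D$ if $\nu_{\min}(\mathcal D',d)=\nu_{\min}(\mathcal D,d)$ and $\mathcal D\xrightarrow{d}\mathcal D'$ otherwise. $(\mathcal D,d)$ is irreducible if there is no Ferrers diagram $\mathcal D'$ with $\mathcal D'\xrightarrow{d}\mathcal D$. *)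

(* Defs.v *)
From HB Require Import structures.
From mathcomp Require Import all_boot all_order.
From mathcomp Require Import finmap.
Set Implicit Arguments. Unset Strict Implicit. Unset Printing Implicit Defensive.
Local Open Scope fset_scope.

(* A point is (row, column); a diagram is a finite set of points. *)
Definition diagram := {fset (nat * nat)}.

Definition is_ferrers (D : diagram) : Prop :=
  (forall p, p \in D -> 0 < p.1 /\ 0 < p.2) /\
  (forall p, p \in D -> forall i j, 1 <= i <= p.1 -> 1 <= j <= p.2 -> (i, j) \in D).

Definition colh (D : diagram) (i : nat) : nat := #|` [fset p in D | p.2 == i] |.

Definition maxcol (D : diagram) : nat := \max_(p <- enum_fset D) p.2.

(* nu_j(D,d) = sum_{i >= j+1} max{0, c_i - (d-1-j)};
   in nat, max{0, c - d + j + 1} is the truncated difference (c + j.+1 - d).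
   Columns beyond maxcol D are empty and contribute 0. *)
Definition nu (D : diagram) (d j : nat) : nat :=
  \sum_(j.+1 <= i < (maxcol D).+1) (colh D i + j.+1 - d).

(* nu_min(D,d) = min_{0 <= j <= d-1} nu_j(D,d)  (used for d >= 1) *)
Definition numin (D : diagram) (d : nat) : nat :=
  \big[minn/nu D d 0]_(j < d) nu D d j.

Definition removable (D : diagram) (P : nat * nat) : Prop :=
  P \in D /\ is_ferrers (D `\ P).

(* arrow d A B  means  A ->_d B.  For D' = D \ {P} with P removable:
   D' ->_d D if nu_min(D',d) = nu_min(D,d), and D ->_d D' otherwise. *)
Definition arrow (d : nat) (A B : diagram) : Prop :=
  (exists P, removable B P /\ A = B `\ P /\ numin A d = numin B d) \/
  (exists P, removable A P /\ B = A `\ P /\ numin B d <> numin A d).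

Definition irreducible (D : diagram) (d : nat) : Prop :=
  ~ (exists D' : diagram, is_ferrers D' /\ arrow d D' D).

Definition Tn (n : nat) : diagram :=
  [fset p | p in [seq (x, y) | y <- iota 1 n, x <- iota 1 (n.+1 - y)]].

(* Main.v *)
Require Import Defs.
From mathcomp Require Import all_boot all_order.
From mathcomp Require Import finmap zify.
Set Implicit Arguments. Unset Strict Implicit. Unset Printing Implicit Defensive.
Local Open Scope fset_scope.
Local Open Scope nat_scope.

Lemma memTn n x y : (x, y) \in Tn n <-> 1 <= x /\ 1 <= y /\ x + y <= n.+1.
Proof.
rewrite /Tn in_fset /=.
split.
  case/allpairsPdep => [y' [x' []]]; rewrite !mem_iota => h1 h2 [-> ->]; lia.
move=> [h1 [h2 h3]]; apply/allpairsPdep; exists y, x; rewrite !mem_iota; split=> //; lia.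
Qed.

Lemma colhE (D : diagram) i h : (forall x, (x, i) \in D <-> 1 <= x <= h) -> colh D i = h.
Proof.
move=> H; rewrite /colh.
have -> : [fset p in D | p.2 == i] = [fset p in [seq (x, i) | x <- iota 1 h]].
  apply/fsetP => [[x y]]; rewrite !inE /=.
  apply/andP/mapP.
    by move=> [Hin /eqP Ey]; subst y; exists x => //; rewrite mem_iota; move/H: Hin; lia.
  by move=> [x' Hx' [-> ->]]; split=> //; apply/H; move: Hx'; rewrite mem_iota; lia.
rewrite card_fseq undup_id ?size_map ?size_iota //.
by rewrite map_inj_uniq ?iota_uniq // => x1 x2 [].
Qed.

Lemma maxcolP (D : diagram) p : p \in D -> p.2 <= maxcol D.
Proof. by move=> Hp; rewrite /maxcol; apply: (@leq_bigmax_seq _ _ xpredT (fun p : nat * nat => p.2)). Qed.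

Definition Sm (D : diagram) d j M := \sum_(j.+1 <= i < M) (colh D i + j.+1 - d).

Lemma Sm_ext D d j K k : j < d -> (forall i, K <= i -> colh D i = 0) -> Sm D d j (K + k) = Sm D d j K.
Proof.
move=> jd H; elim: k => [|k IH]; first by rewrite addn0.
rewrite /Sm addnS.
case: (leqP j.+1 (K + k)) => hj.
  rewrite big_nat_recr //= H ?leq_addr // -/(Sm _ _ _ _) IH /Sm; lia.
by rewrite !big_geq; lia.
Qed.

Lemma nu_Sm D d j K : j < d -> (forall i, K <= i -> colh D i = 0) -> nu D d j = Sm D d j K.
Proof.
move=> jd H.
have H2 : forall i, (maxcol D).+1 <= i -> colh D i = 0.
  move=> i hi; apply: colhE => x; split => [/maxcolP /= ?|]; lia.
rewrite /nu -/(Sm D d j _).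
have E1 := Sm_ext (K - (maxcol D).+1) jd H2.
have E2 := Sm_ext ((maxcol D).+1 - K) jd H.
have E3 : ((maxcol D).+1 + (K - (maxcol D).+1) = K + ((maxcol D).+1 - K))%N by lia.
rewrite E3 in E1.
by rewrite -E1 E2.
Qed.

Lemma sum_mod (f g : nat -> nat) m M b : m <= b < M -> (forall i, m <= i < M -> i != b -> f i = g i) ->
  \sum_(m <= i < M) f i + g b = \sum_(m <= i < M) g i + f b.
Proof.
move=> /andP[h1 h2] H.
have Sp : forall F : nat -> nat, \sum_(m <= i < M) F i = \sum_(m <= i < b) F i + F b + \sum_(b.+1 <= i < M) F i.
  by move=> F; rewrite (big_cat_nat h1 (ltnW h2)) /= (big_cat_nat (leqnSn b) h2) /= big_nat1 addnA.
rewrite (Sp f) (Sp g).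
rewrite (@eq_big_nat _ _ _ m b f g); last by move=> i hi; apply: H; lia.
rewrite (@eq_big_nat _ _ _ b.+1 M f g); last by move=> i hi; apply: H; lia.
lia.
Qed.

Definition Tsum n d j := \sum_(j.+1 <= i < n.+2) (n.+1 - i + j.+1 - d).

Lemma Tsum_const n d j : j < d -> Tsum n d j = Tsum n d 0.
Proof.
elim: j => [//|j IH] hj.
rewrite -IH; last lia.
case: (leqP j.+1 n.+1) => hjn.
  rewrite /Tsum big_add1 /= [in RHS]big_nat_recr //=.
  rewrite (@eq_big_nat _ _ _ j.+1 n.+1 _ (fun i => n.+1 - i + j.+1 - d)); first lia.
  move=> i hi; lia.
by rewrite /Tsum !big_geq //; lia.
Qed.

Lemma nuE D n d j b hb : j < d -> 0 < b -> b <= n.+1 ->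
 (forall i, 0 < i -> i != b -> colh D i = n.+1 - i) -> colh D b = hb ->
 nu D d j + (j < b) * (n.+1 - b + j.+1 - d) = Tsum n d 0 + (j < b) * (hb + j.+1 - d).
Proof.
move=> jd b0 bn H Hb.
rewrite (@nu_Sm D d j n.+2) //; last by move=> i hi; rewrite H; lia.
rewrite -(Tsum_const n jd) /Sm /Tsum.
case: (ltnP j b) => hjb.
  rewrite !mul1n -Hb.
  apply: (@sum_mod (fun i => colh D i + j.+1 - d) (fun i => n.+1 - i + j.+1 - d)); first lia.
  by move=> i hi hib; rewrite H //; lia.
rewrite !mul0n !addn0; apply: eq_big_nat => i hi; rewrite H //; lia.
Qed.

Lemma bigmin_le k x0 (f : nat -> nat) j : j < k -> \big[minn/x0]_(i < k) f i <= f j.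
Proof.
elim: k f j => [//|k IH] f j hj; rewrite big_ord_recl /=.
case: j hj => [|j] hj; first by apply: geq_minl.
apply: leq_trans (geq_minr _ _) _.
have := IH (fun i => f i.+1) j hj.
by rewrite (@eq_bigr _ _ _ _ _ _ _ (fun i : 'I_k => f i.+1)).
Qed.

Lemma bigmin_ge k x0 (f : nat -> nat) m : m <= x0 -> (forall j, j < k -> m <= f j) ->
  m <= \big[minn/x0]_(i < k) f i.
Proof.
move=> h0 H; apply: (big_ind (fun x => m <= x)) => //.
  by move=> x y hx hy; rewrite leq_min hx hy.
by move=> i _; apply: H.
Qed.

Lemma numin_le D d j : j < d -> numin D d <= nu D d j.
Proof. exact: bigmin_le. Qed.

Lemma numin_ge D d m : 0 < d -> (forall j, j < d -> m <= nu D d j) -> m <= numin D d.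
Proof. by move=> d0 H; apply: bigmin_ge => //; apply: H. Qed.

Lemma memTn' n (p : nat * nat) : p \in Tn n <-> 1 <= p.1 /\ 1 <= p.2 /\ p.1 + p.2 <= n.+1.
Proof. by case: p => x y; apply: memTn. Qed.

Lemma memD1 n a b x y : (x, y) \in Tn n `\ (a, b) <-> ~ (x = a /\ y = b) /\ 1 <= x /\ 1 <= y /\ x + y <= n.+1.
Proof.
rewrite in_fsetD1; split.
  by case/andP => /eqP hne /memTn h; split=> // -[ex ey]; apply: hne; rewrite ex ey.
move=> [hne h]; apply/andP; split; last by apply/memTn.
by apply/eqP => -[ex ey]; apply: hne.
Qed.

Lemma memU1 n a b x y : (x, y) \in (a, b) |` Tn n <-> (x = a /\ y = b) \/ (1 <= x /\ 1 <= y /\ x + y <= n.+1).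
Proof.
rewrite in_fset1U; split.
  by case/orP => [/eqP [-> ->]|]; [left | move/memTn; right].
case=> [[-> ->]|h]; first by rewrite eqxx.
by apply/orP; right; apply/memTn.
Qed.

Lemma colhT n i : 0 < i -> colh (Tn n) i = n.+1 - i.
Proof. move=> hi; apply: colhE => x; rewrite memTn; lia. Qed.

Lemma nuT n d j : j < d -> nu (Tn n) d j = Tsum n d 0.
Proof.
move=> jd; have := @nuE (Tn n) n d j 1 (n.+1 - 1) jd (ltn0Sn 0) (ltn0Sn n) (fun i hi _ => colhT n hi) (colhT n (ltn0Sn 0)).
lia.
Qed.

Lemma nuD1 n d j a b : j < d -> a + b = n.+1 -> 0 < a -> 0 < b ->
  nu (Tn n `\ (a, b)) d j + (j < b) * (n.+1 - b + j.+1 - d) = Tsum n d 0 + (j < b) * (n - b + j.+1 - d).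
Proof.
move=> jd hab ha hb; apply: nuE => //; first lia.
  by move=> i hi /eqP hib; apply: colhE => x; rewrite memD1; lia.
by apply: colhE => x; rewrite memD1; lia.
Qed.

Lemma nuU1 n d j a b : j < d -> a + b = n.+2 -> 0 < a -> 0 < b ->
  nu ((a, b) |` Tn n) d j + (j < b) * (n.+1 - b + j.+1 - d) = Tsum n d 0 + (j < b) * (n.+2 - b + j.+1 - d).
Proof.
move=> jd hab ha hb; apply: nuE => //; first lia.
  by move=> i hi /eqP hib; apply: colhE => x; rewrite memU1; lia.
by apply: colhE => x; rewrite memU1; lia.
Qed.

Lemma ferT n : is_ferrers (Tn n).
Proof.
split; first by move=> [x y] /memTn /=; lia.
by move=> [x y] /memTn /= h i j /andP[h1 h2] /andP[h3 h4]; apply/memTn; lia.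
Qed.

Lemma ferD1 n a b : a + b = n.+1 -> is_ferrers (Tn n `\ (a, b)).
Proof.
move=> hab; split; first by move=> [x y] /memD1 /=; lia.
by move=> [x y] /memD1 /= h i j /andP[h1 h2] /andP[h3 h4]; apply/memD1; lia.
Qed.

Lemma ferU1 n a b : a + b = n.+2 -> 0 < a -> 0 < b -> is_ferrers ((a, b) |` Tn n).
Proof.
move=> hab ha hb; split; first by move=> [x y] /memU1 /=; lia.
by move=> [x y] /memU1 /= h i j /andP[h1 h2] /andP[h3 h4]; apply/memU1; lia.
Qed.

Lemma numinT n d : 0 < d -> numin (Tn n) d = Tsum n d 0.
Proof.
move=> d0; apply/eqP; rewrite eqn_leq; apply/andP; split.
  by rewrite -(nuT n d0); apply: numin_le.
by apply: numin_ge => // j hj; rewrite nuT.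
Qed.

Theorem proposition4p22 (n d : nat) :
  0 < n -> 0 < d -> (irreducible (Tn n) d <-> d <= n <= 2 * d - 3).
Proof.
move=> n0 d0; have NT := numinT n d0; split.
- move=> Hirr.
  have hdn : d <= n.
    case: (leqP d n) => // hnd; exfalso; apply: Hirr.
    exists (Tn n `\ (n, 1)); split; first by apply: ferD1; lia.
    left; exists (n, 1); split.
      split; last by apply: ferD1; lia.
      by apply/memTn; lia.
    split=> //; rewrite NT; apply/eqP; rewrite eqn_leq; apply/andP; split.
      apply: leq_trans (numin_le _ d0) _; have := @nuD1 n d 0 n 1 d0 (_ : n + 1 = n.+1) n0 (ltn0Sn 0); lia.
    apply: numin_ge => // j hj; have := @nuD1 n d j n 1 hj (_ : n + 1 = n.+1) n0 (ltn0Sn 0); lia.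
  rewrite hdn /=; case: (leqP n (2 * d - 3)) => // hn; exfalso; apply: Hirr.
  have hab : (n.+2 - d) + d = n.+2 by lia.
  have ha : 0 < n.+2 - d by lia.
  exists ((n.+2 - d, d) |` Tn n); split; first by apply: ferU1.
  right; exists (n.+2 - d, d); split.
    split; first by apply: fset1U1.
    rewrite fsetU1K; first exact: ferT.
    by apply/negP => /memTn; lia.
  split; first by rewrite fsetU1K //; apply/negP => /memTn; lia.
  rewrite NT => Heq.
  have : (Tsum n d 0).+1 <= numin ((n.+2 - d, d) |` Tn n) d.
    apply: numin_ge => // j hj; have := nuU1 hj hab ha d0; lia.
  lia.
- move=> /andP[hdn hn] [D' [fD' [[P [[PT fP] [ED Heq]]] | [P [[PD' fP] [ED Hne]]]]]].
  + case: P PT fP ED Heq => a b /memTn [ha [hb hab]] fP ED Heq.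
    have habn : a + b = n.+1.
      case: (leqP n.+1 (a + b)) => h; first lia.
      have : (a.+1, b) \in Tn n `\ (a, b) by apply/memD1; lia.
      move/(proj2 fP (a.+1, b)) => /(_ a b) /=.
      rewrite fsetD11; lia.
    subst D'; move: Heq; rewrite NT.
    set j := (b + d) - n.+1.
    have hj : j < d by lia.
    have := nuD1 hj habn ha hb.
    have := numin_le (Tn n `\ (a, b)) hj.
    lia.
  + case: P PD' fP ED Hne => a b PD' fP ED Hne.
    have [ha hb] := proj1 fD' _ PD'; simpl in ha, hb.
    have PT : (a, b) \notin Tn n by rewrite ED fsetD11.
    have ED' : D' = (a, b) |` Tn n by rewrite ED fsetD1K.
    have h1 : 1 < a -> a.-1 + b <= n.+1.
      move=> h; have : (a.-1, b) \in D' by apply: (proj2 fD' _ PD') => /=; lia.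
      by rewrite ED' => /memU1; lia.
    have h2 : 1 < b -> a + b.-1 <= n.+1.
      move=> h; have : (a, b.-1) \in D' by apply: (proj2 fD' _ PD') => /=; lia.
      by rewrite ED' => /memU1; lia.
    have h3 : n.+1 < a + b by move: PT => /negP H; case: (leqP (a + b) n.+1) => // ?; exfalso; apply: H; apply/memTn; lia.
    have habn : a + b = n.+2 by lia.
    apply: Hne; rewrite NT ED'.
    apply/eqP; rewrite eqn_leq; apply/andP; split.
      by apply: numin_ge => // j hj; have := nuU1 hj habn ha hb; lia.
    case: (ltnP b d) => hbd.
      apply: leq_trans (numin_le _ hbd) _; have := nuU1 hbd habn ha hb; lia.
    apply: leq_trans (numin_le _ d0) _; have := nuU1 d0 habn ha hb; lia.
Qed.
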